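(* Let $\phi$ be a formula. If there exists a closed term $M$ such that $M:\phi$ (with respect to $\Omega$), then $\phi$ is $\Lambda_{\mathrm{NF}}$-inhabited.
   Context: Formulas are built from propositional atoms with $\to$. Let $\mathcal X$ be a countably infinite set of variables with an injective map $\mathcal O:\mathcal X\to\mathbb N$; write $x<y$ iff $\mathcal O(x)<\mathcal O(y)$. Terms are terms of pure $\lambda$-calculus over $\mathcal X$, not identified up to $\alpha$-conversion; by convention two distinct $\lambda$'s never bind the same variable in a term and no variable is both free and bound in a term. $\mathrm{Free}(M)$ is the strictly increasing sequence of free variables of $M$. Hereditarily right-maximal (HRM) terms are defined inductively: every variable is HRM; if $M$ is HRM and $x$ is the greatest free variable of $M$, then $\lambda x.M$ is HRM; if $M,N$ are HRM and for each free variable $x$ of $M$ there is a free variable $y$ of $N$ with $x\le y$, then $(MN)$ is HRM. Fix a function $\Omega$ from variables to formulas such that $\Omega^{-1}(\phi)$ is infinite for every formula $\phi$. The judgment $M:\phi$ (''$M$ has type $\phi$'') is defined by: $x:\Omega(x)$; if $x:\chi$, $M:\psi$ and $\lambda x.M$ is HRM then $\lambda x.M:\chi\to\psi$; if $M:\chi\to\psi$, $N:\chi$ and $(MN)$ is HRM then $(MN):\psi$. $\Lambda_{\mathrm{NF}}$ denotes the set of typed terms in $\beta$-normal form; a $\Lambda_{\mathrm{NF}}$-inhabitant of $\phi$ is a closed term of $\Lambda_{\mathrm{NF}}$ of type $\phi$, and $\phi$ is $\Lambda_{\mathrm{NF}}$-inhabited if it has one. *)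

(* Defs.v *)
From Stdlib Require Import List.
Import ListNotations.
Set Implicit Arguments.

Inductive formula (A : Type) : Type :=
| Atom : A -> formula A
| Imp : formula A -> formula A -> formula A.
Arguments Atom {A} _.
Arguments Imp {A} _ _.

(* Pure lambda terms over variables X, NOT identified up to alpha. *)
Inductive term (X : Type) : Type :=
| Var : X -> term X
| Lam : X -> term X -> term X
| App : term X -> term X -> term X.
Arguments Var {X} _.
Arguments Lam {X} _ _.
Arguments App {X} _ _.

Section Terms.
Variable X : Type.

Inductive free : X -> term X -> Prop :=
| free_var : forall x, free x (Var x)
| free_lam : forall x y M, free x M -> x <> y -> free x (Lam y M)
| free_appl : forall x M N, free x M -> free x (App M N)
| free_appr : forall x M N, free x N -> free x (App M N).

Inductive bound : X -> term X -> Prop :=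
| bound_here : forall x M, bound x (Lam x M)
| bound_lam : forall x y M, bound x M -> bound x (Lam y M)
| bound_appl : forall x M N, bound x M -> bound x (App M N)
| bound_appr : forall x M N, bound x N -> bound x (App M N).

Fixpoint binders (M : term X) : list X :=
  match M with
  | Var _ => []
  | Lam x M => x :: binders M
  | App M N => binders M ++ binders N
  end.

(* The paper's naming convention: two distinct lambdas never bind the same
   variable, and no variable is both free and bound. *)
Definition well_named (M : term X) : Prop :=
  NoDup (binders M) /\ (forall x, ~ (free x M /\ bound x M)).

Definition closed (M : term X) : Prop := forall x, ~ free x M.

Inductive has_redex : term X -> Prop :=
| redex_here : forall x M N, has_redex (App (Lam x M) N)
| redex_lam : forall x M, has_redex M -> has_redex (Lam x M)
| redex_appl : forall M N, has_redex M -> has_redex (App M N)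
| redex_appr : forall M N, has_redex N -> has_redex (App M N).

Definition beta_normal (M : term X) : Prop := ~ has_redex M.

(* Hereditarily right-maximal terms, w.r.t. the order x < y iff O x < O y *)
Inductive HRM (O : X -> nat) : term X -> Prop :=
| HRM_var : forall x, HRM O (Var x)
| HRM_lam : forall x M, HRM O M -> free x M ->
    (forall y, free y M -> O y <= O x) -> HRM O (Lam x M)
| HRM_app : forall M N, HRM O M -> HRM O N ->
    (forall x, free x M -> exists y, free y N /\ O x <= O y) ->
    HRM O (App M N).

Inductive has_type {A : Type} (O : X -> nat) (Omega : X -> formula A)
  : term X -> formula A -> Prop :=
| ty_var : forall x, has_type O Omega (Var x) (Omega x)
| ty_lam : forall x M chi psi,
    has_type O Omega (Var x) chi -> has_type O Omega M psi ->
    HRM O (Lam x M) -> has_type O Omega (Lam x M) (Imp chi psi)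
| ty_app : forall M N chi psi,
    has_type O Omega M (Imp chi psi) -> has_type O Omega N chi ->
    HRM O (App M N) -> has_type O Omega (App M N) psi.

Definition infinite_pred (P : X -> Prop) : Prop :=
  ~ exists l : list X, forall x, P x -> In x l.

Definition NF_inhabited {A : Type} (O : X -> nat) (Omega : X -> formula A)
  (phi : formula A) : Prop :=
  exists N, closed N /\ well_named N /\ beta_normal N /\ has_type O Omega N phi.

End Terms.

(* Main.v *)
Require Import Defs.
From Stdlib Require Import List Lia Arith Classical Permutation ClassicalEpsilon.
Import ListNotations.

Inductive dterm (A : Type) : Type :=
| dVar : nat -> dterm A
| dLam : formula A -> dterm A -> dterm A
| dApp : dterm A -> dterm A -> dterm A.
Arguments dVar {A} _.
Arguments dLam {A} _ _.
Arguments dApp {A} _ _.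

Inductive dfree {A} : nat -> dterm A -> Prop :=
| df_var : forall i, dfree i (dVar i)
| df_lam : forall i f b, dfree (S i) b -> dfree i (dLam f b)
| df_appl : forall i t u, dfree i t -> dfree i (dApp t u)
| df_appr : forall i t u, dfree i u -> dfree i (dApp t u).

Lemma dfree_var {A} i j : @dfree A i (dVar j) <-> i = j.
Proof. split; [intro H; inversion H; auto | intros ->; constructor]. Qed.
Lemma dfree_lam {A} i f b : @dfree A i (dLam f b) <-> dfree (S i) b.
Proof. split; [intro H; inversion H; auto | intro; constructor; auto]. Qed.
Lemma dfree_app {A} i t u : @dfree A i (dApp t u) <-> dfree i t \/ dfree i u.
Proof. split; [intro H; inversion H; auto | intros [H|H]; [apply df_appl|apply df_appr]; auto]. Qed.

Fixpoint lift {A} (d c : nat) (t : dterm A) : dterm A :=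
  match t with
  | dVar i => if i <? c then dVar i else dVar (i + d)
  | dLam f b => dLam f (lift d (S c) b)
  | dApp t u => dApp (lift d c t) (lift d c u)
  end.

Fixpoint subst {A} (k : nat) (s : dterm A) (t : dterm A) : dterm A :=
  match t with
  | dVar i => if i <? k then dVar i else if i =? k then lift k 0 s else dVar (pred i)
  | dLam f b => dLam f (subst (S k) s b)
  | dApp t u => dApp (subst k s t) (subst k s u)
  end.

Lemma dfree_lift1 {A} (t : dterm A) : forall d c j, dfree j t ->
  dfree (if j <? c then j else j + d) (lift d c t).
Proof.
  induction t; intros d c j H; simpl.
  - apply dfree_var in H; subst j. destruct (Nat.ltb_spec n c); constructor.
  - apply dfree_lam in H. apply dfree_lam. specialize (IHt d (S c) _ H).
    simpl in IHt. destruct (Nat.ltb_spec j c), (Nat.ltb_spec (S j) (S c)); try lia; auto.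
  - apply dfree_app in H. apply dfree_app. destruct H; [left; apply IHt1|right; apply IHt2]; auto.
Qed.

Lemma dfree_lift2 {A} (t : dterm A) : forall d c i, dfree i (lift d c t) ->
  exists j, dfree j t /\ i = (if j <? c then j else j + d).
Proof.
  induction t; intros d c i H; simpl in H.
  - exists n; split; [constructor|]. destruct (Nat.ltb_spec n c); apply dfree_var in H; auto.
  - apply dfree_lam in H. destruct (IHt _ _ _ H) as [j [Hj E]].
    destruct j as [|j].
    + destruct (Nat.ltb_spec 0 (S c)); lia.
    + exists j; split; [apply dfree_lam; auto|].
      destruct (Nat.ltb_spec j c), (Nat.ltb_spec (S j) (S c)); lia.
  - apply dfree_app in H. destruct H as [H|H];
    [destruct (IHt1 _ _ _ H) as [j [Hj E]]|destruct (IHt2 _ _ _ H) as [j [Hj E]]];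
    exists j; split; auto; apply dfree_app; auto.
Qed.

Lemma dfree_subst1 {A} (t : dterm A) : forall k s j, dfree j t ->
  (j < k -> dfree j (subst k s t)) /\ (k < j -> dfree (pred j) (subst k s t)).
Proof.
  induction t; intros k s j H; simpl.
  - apply dfree_var in H; subst j.
    destruct (Nat.ltb_spec n k); [split; intros; [constructor|lia]|].
    destruct (Nat.eqb_spec n k); [split; intros; lia|]. split; intros; [lia|constructor].
  - apply dfree_lam in H. destruct (IHt (S k) s _ H) as [H1 H2].
    split; intro; apply dfree_lam; [apply H1; lia|].
    replace (S (pred j)) with (pred (S j)) by lia. apply H2; lia.
  - apply dfree_app in H. destruct H as [H|H];
    [destruct (IHt1 k s _ H) as [H1 H2]|destruct (IHt2 k s _ H) as [H1 H2]];
    split; intro; apply dfree_app; auto.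
Qed.

Lemma dfree_subst1b {A} (t : dterm A) : forall k s j, dfree k t -> dfree j s ->
  dfree (j + k) (subst k s t).
Proof.
  induction t; intros k s j H Hs; simpl.
  - apply dfree_var in H; subst k.
    destruct (Nat.ltb_spec n n); [lia|]. rewrite Nat.eqb_refl.
    pose proof (dfree_lift1 s n 0 j Hs) as X. destruct (Nat.ltb_spec j 0); [lia|]. auto.
  - apply dfree_lam in H. apply dfree_lam. replace (S (j + k)) with (j + S k) by lia. auto.
  - apply dfree_app in H. apply dfree_app. destruct H; [left|right]; auto.
Qed.

Lemma dfree_subst2 {A} (t : dterm A) : forall k s i, dfree i (subst k s t) ->
  (dfree i t /\ i < k) \/ (dfree (S i) t /\ k <= i) \/ (dfree k t /\ exists j, dfree j s /\ i = j + k).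
Proof.
  induction t; intros k s i H; simpl in H.
  - destruct (Nat.ltb_spec n k).
    + apply dfree_var in H; subst. left; split; [constructor|auto].
    + destruct (Nat.eqb_spec n k).
      * subst. right; right. split; [constructor|].
        destruct (dfree_lift2 _ _ _ _ H) as [j [Hj E]]. exists j; split; [exact Hj|].
        destruct (Nat.ltb_spec j 0); lia.
      * apply dfree_var in H; subst. right; left. split; [|lia].
        replace (S (pred n)) with n by lia. constructor.
  - apply dfree_lam in H. destruct (IHt _ _ _ H) as [[H1 H2]|[[H1 H2]|[H1 [j [Hj E]]]]].
    + left; split; [apply dfree_lam; auto|lia].
    + right; left; split; [apply dfree_lam; auto|lia].
    + right; right; split; [apply dfree_lam; auto|]. exists j; split; auto; lia.
  - apply dfree_app in H. destruct H as [H|H];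
    [destruct (IHt1 _ _ _ H) as [[H1 H2]|[[H1 H2]|[H1 [j [Hj E]]]]]
    |destruct (IHt2 _ _ _ H) as [[H1 H2]|[[H1 H2]|[H1 [j [Hj E]]]]]].
    all: try (left; split; [apply dfree_app; auto|auto]; fail).
    all: try (right; left; split; [apply dfree_app; auto|auto]; fail).
    all: right; right; split; [apply dfree_app; auto|exists j; auto].
Qed.

Inductive dHRM {A} : dterm A -> Prop :=
| dH_var : forall i, dHRM (dVar i)
| dH_lam : forall f b, dHRM b -> dfree 0 b -> dHRM (dLam f b)
| dH_app : forall t u, dHRM t -> dHRM u ->
    (forall i, dfree i t -> exists j, dfree j u /\ j <= i) -> dHRM (dApp t u).

Lemma dHRM_lift {A} (t : dterm A) : forall d c, dHRM t -> dHRM (lift d c t).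
Proof.
  induction t; intros d c H; simpl.
  - destruct (n <? c); constructor.
  - inversion H; subst. constructor; auto.
    pose proof (dfree_lift1 t d (S c) 0 H3) as X. simpl in X. auto.
  - inversion H; subst. constructor; auto.
    intros i Hi. destruct (dfree_lift2 _ _ _ _ Hi) as [j [Hj E]].
    destruct (H4 _ Hj) as [j' [Hj' Le]].
    exists (if j' <? c then j' else j' + d). split; [apply dfree_lift1; auto|].
    subst. destruct (Nat.ltb_spec j c), (Nat.ltb_spec j' c); lia.
Qed.

Lemma dHRM_subst {A} (t : dterm A) : forall k s, dHRM t -> dHRM s ->
  (forall i, dfree i t -> k < i -> exists j, dfree j s /\ j + k < i) ->
  dHRM (subst k s t).
Proof.
  induction t; intros k s Ht Hs Hc; simpl.
  - destruct (n <? k); [constructor|]. destruct (n =? k); [apply dHRM_lift; auto|constructor].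
  - inversion Ht; subst. constructor.
    + apply IHt; auto. intros i Hi Hk. destruct i as [|i]; [lia|].
      destruct (Hc i) as [j [Hj E]]; [apply dfree_lam; auto|lia|]. exists j; split; auto; lia.
    + apply (proj1 (dfree_subst1 t (S k) s 0 H2)). lia.
  - inversion Ht as [| |t1x t2x HR1 HR2 HC]; subst.
    assert (Hc1 : forall i, dfree i t1 -> k < i -> exists j, dfree j s /\ j + k < i)
      by (intros; apply Hc; auto; apply dfree_app; auto).
    assert (Hc2 : forall i, dfree i t2 -> k < i -> exists j, dfree j s /\ j + k < i)
      by (intros; apply Hc; auto; apply dfree_app; auto).
    constructor; auto.
    intros a Ha. destruct (dfree_subst2 _ _ _ _ Ha) as [[G1 G2]|[[G1 G2]|[G1 [j [Hj E]]]]].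
    + destruct (HC _ G1) as [b [Hb Le]].
      destruct (Nat.lt_trichotomy b k) as [Lt|[Eq|Gt]].
      * exists b; split; [apply (proj1 (dfree_subst1 _ k s _ Hb)); auto|lia].
      * lia.
      * lia.
    + destruct (HC _ G1) as [b [Hb Le]].
      destruct (Nat.lt_trichotomy b k) as [Lt|[Eq|Gt]].
      * exists b; split; [apply (proj1 (dfree_subst1 _ k s _ Hb)); auto|lia].
      * subst b. destruct (Hc1 (S a) G1) as [j [Hj E]]; [lia|].
        exists (j + k); split; [apply dfree_subst1b; auto|lia].
      * exists (pred b); split; [apply (proj2 (dfree_subst1 _ k s _ Hb)); auto|lia].
    + subst a. destruct (HC _ G1) as [b [Hb Le]].
      destruct (Nat.lt_trichotomy b k) as [Lt|[Eq|Gt]].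
      * exists b; split; [apply (proj1 (dfree_subst1 _ k s _ Hb)); auto|lia].
      * subst b. exists (j + k); split; [apply dfree_subst1b; auto|lia].
      * lia.
Qed.

Inductive dty {A} : list (formula A) -> dterm A -> formula A -> Prop :=
| dty_var : forall G i f, nth_error G i = Some f -> dty G (dVar i) f
| dty_lam : forall G f b g, dty (f :: G) b g -> dty G (dLam f b) (Imp f g)
| dty_app : forall G t u f g, dty G t (Imp f g) -> dty G u f -> dty G (dApp t u) g.

Lemma dty_weak {A} (t : dterm A) : forall G f, dty G t f -> forall G1 G2 D, G = G1 ++ G2 ->
  dty (G1 ++ D ++ G2) (lift (length D) (length G1) t) f.
Proof.
  induction t; intros G g H G1 G2 D E; subst; simpl; inversion H; subst.
  - destruct (Nat.ltb_spec n (length G1)).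
    + constructor. rewrite nth_error_app1 in *; auto.
    + constructor. rewrite nth_error_app2 in * by lia. rewrite nth_error_app2 by lia.
      replace (n + length D - length G1 - length D) with (n - length G1) by lia. auto.
  - constructor. apply (IHt _ _ H4 (f :: G1) G2 D). reflexivity.
  - econstructor; [apply (IHt1 _ _ H3)|apply (IHt2 _ _ H5)]; eauto.
Qed.

Lemma dty_subst {A} (t : dterm A) : forall G' f, dty G' t f -> forall G1 G p s,
  G' = G1 ++ p :: G -> dty G s p -> dty (G1 ++ G) (subst (length G1) s t) f.
Proof.
  induction t; intros G' g H G1 G p s E Hs; subst; simpl; inversion H; subst.
  - destruct (Nat.ltb_spec n (length G1)).
    + constructor. rewrite nth_error_app1 in *; auto.
    + rewrite nth_error_app2 in H2 by lia.
      destruct (Nat.eqb_spec n (length G1)).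
      * subst n. rewrite Nat.sub_diag in H2. simpl in H2. injection H2 as ->.
        apply (dty_weak s G g Hs [] G G1). reflexivity.
      * constructor. rewrite nth_error_app2 by lia.
        destruct (n - length G1) as [|k] eqn:En; [lia|]. simpl in H2.
        replace (pred n - length G1) with k by lia. auto.
  - constructor. eapply (IHt _ _ ltac:(eassumption) (f :: G1) G p s); eauto.
  - econstructor; [eapply IHt1|eapply IHt2]; eauto.
Qed.

Inductive step {A} : dterm A -> dterm A -> Prop :=
| st_beta : forall f t s, step (dApp (dLam f t) s) (subst 0 s t)
| st_lam : forall f t t', step t t' -> step (dLam f t) (dLam f t')
| st_appl : forall t t' u, step t t' -> step (dApp t u) (dApp t' u)
| st_appr : forall t u u', step u u' -> step (dApp t u) (dApp t u').

Inductive star {A} : dterm A -> dterm A -> Prop :=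
| star_refl : forall t, star t t
| star_step : forall t t' t'', step t t' -> star t' t'' -> star t t''.

Lemma star_trans {A} (t t' t'' : dterm A) : star t t' -> star t' t'' -> star t t''.
Proof. induction 1; intros; auto. econstructor; eauto. Qed.
Lemma star_lam {A} f (t t' : dterm A) : star t t' -> star (dLam f t) (dLam f t').
Proof. induction 1; [constructor|econstructor; [apply st_lam; eauto|auto]]. Qed.
Lemma star_app {A} (t t' u u' : dterm A) : star t t' -> star u u' -> star (dApp t u) (dApp t' u').
Proof.
  intros H1 H2. apply star_trans with (dApp t' u).
  - clear H2. induction H1; [constructor|econstructor; [apply st_appl; eauto|auto]].
  - clear H1. induction H2; [constructor|econstructor; [apply st_appr; eauto|auto]].
Qed.

Lemma step_ty {A} (t t' : dterm A) : step t t' -> forall G f, dty G t f -> dty G t' f.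
Proof.
  induction 1; intros G g Ht; inversion Ht; subst.
  - match goal with Hl : dty G (dLam _ _) _ |- _ => inversion Hl; subst end.
    eapply (dty_subst t _ _ ltac:(eassumption) [] G); [reflexivity|eauto].
  - constructor; auto.
  - econstructor; eauto.
  - econstructor; eauto.
Qed.
Lemma star_ty {A} (t t' : dterm A) : star t t' -> forall G f, dty G t f -> dty G t' f.
Proof. induction 1; intros; eauto using step_ty. Qed.

Lemma step_HRM {A} (t t' : dterm A) : step t t' -> dHRM t ->
  dHRM t' /\ (forall i, dfree i t' <-> dfree i t).
Proof.
  induction 1 as [f t s|f t t' Hs IHstep|t t' u Hs IHstep|t u u' Hs IHstep]; intro HH.
  - inversion HH as [| |t1x t2x HR1 HR2 HC]; subst. inversion HR1; subst. split.
    + apply dHRM_subst; auto. intros i Hi Hk. destruct i as [|i]; [lia|].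
      destruct (HC i) as [j [Hj E]]; [apply dfree_lam; auto|]. exists j; split; auto; lia.
    + intro i. rewrite dfree_app, dfree_lam. split.
      * intro Hi. destruct (dfree_subst2 _ _ _ _ Hi) as [[G1 G2]|[[G1 G2]|[G1 [j [Hj E]]]]].
        -- lia.
        -- left; auto.
        -- right. subst. rewrite Nat.add_0_r. auto.
      * intros [Hi|Hi].
        -- apply (proj2 (dfree_subst1 t 0 s _ Hi)). lia.
        -- replace i with (i + 0) by lia. apply dfree_subst1b; auto.
  - inversion HH as [|? ? Hb0 Hf0|]; subst. destruct (IHstep Hb0) as [Ha Hb]. split.
    + constructor; auto. apply Hb; auto.
    + intro i. rewrite !dfree_lam. auto.
  - inversion HH as [| |? ? Ht0 Hu0 Hc0]; subst. destruct (IHstep Ht0) as [Ha Hb]. split.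
    + constructor; auto. intros i Hi. apply Hc0, Hb, Hi.
    + intro i. rewrite !dfree_app, Hb. tauto.
  - inversion HH as [| |? ? Ht0 Hu0 Hc0]; subst. destruct (IHstep Hu0) as [Ha Hb]. split.
    + constructor; auto. intros i Hi. destruct (Hc0 i Hi) as [j [Hj E]]. exists j. split; auto. apply Hb; auto.
    + intro i. rewrite !dfree_app, Hb. tauto.
Qed.

Lemma star_HRM {A} (t t' : dterm A) : star t t' -> dHRM t ->
  dHRM t' /\ (forall i, dfree i t' <-> dfree i t).
Proof.
  induction 1 as [t|t t' t'' Hs Hst IHstar]; intro HH; [split; [auto|tauto]|].
  destruct (step_HRM _ _ Hs HH) as [Ha Hb]. destruct (IHstar Ha) as [Hc Hd].
  split; auto. intro i. rewrite Hd, Hb. tauto.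
Qed.

Fixpoint ne {A} (t : dterm A) : Prop :=
  match t with dVar _ => True | dApp h m => ne h /\ nf m | dLam _ _ => False end
with nf {A} (t : dterm A) : Prop :=
  match t with dVar _ => True | dApp h m => ne h /\ nf m | dLam _ b => nf b end.

Lemma nf_lift {A} (t : dterm A) : forall d c, (ne t -> ne (lift d c t)) /\ (nf t -> nf (lift d c t)).
Proof.
  induction t; intros d c; simpl.
  - destruct (n <? c); simpl; tauto.
  - split; [tauto|]. apply IHt.
  - split; intros [H1 H2]; split; try apply IHt1; try apply IHt2; auto.
Qed.

Inductive suffix {A} : formula A -> formula A -> Prop :=
| suf_refl : forall f, suffix f f
| suf_imp : forall f a b, suffix f b -> suffix f (Imp a b).

Fixpoint fsize {A} (f : formula A) : nat :=
  match f with Atom _ => 1 | Imp a b => S (fsize a + fsize b) end.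

Lemma suffix_imp {A} (c r f : formula A) : suffix (Imp c r) f -> fsize c < fsize f /\ suffix r f.
Proof.
  intro H. remember (Imp c r) as g. induction H; subst.
  - simpl. split; [lia|]. constructor. constructor.
  - destruct IHsuffix as [H1 H2]; auto. simpl. split; [lia|]. constructor; auto.
Qed.

Lemma nf_not_ne {A} (t : dterm A) : nf t -> ~ ne t -> exists f b, t = dLam f b /\ nf b.
Proof. destruct t; simpl; try tauto. intros; eauto. Qed.

Lemma sub_wn {A} : forall m (p : formula A), fsize p < m -> forall t G1 G g n,
  dty (G1 ++ p :: G) t g -> dty G n p -> nf n ->
  (nf t -> exists r, star (subst (length G1) n t) r /\ nf r) /\
  (ne t -> exists r, star (subst (length G1) n t) r /\ nf r /\ (ne r \/ suffix g p)).
Proof.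
  induction m as [|m IHm]; intros p Hp; [lia|].
  induction t; intros G1 G g n0 Ht Hn Hnf.
  - assert (NE : exists r, star (subst (length G1) n0 (dVar n)) r /\ nf r /\ (ne r \/ suffix g p)).
    { simpl. destruct (Nat.ltb_spec n (length G1)).
      - exists (dVar n). simpl. repeat split; auto. constructor.
      - destruct (Nat.eqb_spec n (length G1)).
        + exists (lift (length G1) 0 n0). repeat split; [constructor|apply nf_lift; auto|].
          right. inversion Ht; subst. rewrite nth_error_app2 in H2 by lia.
          rewrite Nat.sub_diag in H2. simpl in H2. injection H2 as ->. constructor.
        + exists (dVar (pred n)). simpl. repeat split; auto. constructor. }
    split; intros _; [destruct NE as [r [? [? ?]]]; eauto|auto].
  - inversion Ht; subst. simpl. split; [|tauto]. intro Hb.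
    destruct (IHt (f :: G1) G _ n0 ltac:(eassumption) Hn Hnf) as [IH1 _].
    destruct (IH1 Hb) as [r [Hs Hr]]. exists (dLam f r). split; [apply star_lam; auto|auto].
  - inversion Ht; subst.
    assert (NE : ne (dApp t1 t2) -> exists r, star (subst (length G1) n0 (dApp t1 t2)) r /\ nf r /\ (ne r \/ suffix g p)).
    { intros [Hne1 Hnf2]. simpl.
      destruct (IHt1 G1 G _ n0 H2 Hn Hnf) as [_ IH1].
      destruct (IH1 Hne1) as [rh [Sh [Nh Dh]]].
      destruct (IHt2 G1 G _ n0 H4 Hn Hnf) as [IH2 _].
      destruct (IH2 Hnf2) as [ru [Su Nu]].
      destruct (classic (ne rh)) as [Hne|Hne].
      - exists (dApp rh ru). split; [apply star_app; auto|]. split; [split; auto|left; split; auto].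
      - destruct Dh as [Dh|Dh]; [contradiction|].
        destruct (nf_not_ne _ Nh Hne) as [c [b [-> Nb]]].
        destruct (suffix_imp _ _ _ Dh) as [Hsz Hsuf].
        assert (Tr : dty (G1 ++ G) (dLam c b) (Imp f g)).
        { eapply star_ty; eauto. eapply dty_subst; eauto. }
        assert (Tu : dty (G1 ++ G) ru f).
        { eapply star_ty; eauto. eapply dty_subst; eauto. }
        inversion Tr; subst.
        destruct (IHm f ltac:(lia) b [] (G1 ++ G) g ru ltac:(eassumption) Tu Nu) as [IH3 _].
        destruct (IH3 Nb) as [r [Sr Nr]]. simpl in Sr.
        exists r. repeat split; auto.
        apply star_trans with (dApp (dLam f b) ru); [apply star_app; auto|].
        econstructor; [constructor|auto]. }
    split; [intro H; destruct (NE H) as [r [? [? ?]]]; eauto|exact NE].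
Qed.

Lemma wn {A} (t : dterm A) : forall G f, dty G t f -> exists r, star t r /\ nf r.
Proof.
  induction t; intros G g Ht.
  - exists (dVar n). split; [constructor|simpl; auto].
  - inversion Ht; subst. destruct (IHt _ _ ltac:(eassumption)) as [r [Hs Hr]].
    exists (dLam f r). split; [apply star_lam; auto|simpl; auto].
  - inversion Ht; subst.
    destruct (IHt1 _ _ ltac:(eassumption)) as [r1 [S1 N1]].
    destruct (IHt2 _ _ ltac:(eassumption)) as [r2 [S2 N2]].
    destruct (classic (ne r1)) as [Hne|Hne].
    + exists (dApp r1 r2). split; [apply star_app; auto|simpl; auto].
    + destruct (nf_not_ne _ N1 Hne) as [c [b [-> Nb]]].
      assert (Tr : dty G (dLam c b) (Imp f g)) by (eapply star_ty; eauto).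
      assert (Tu : dty G r2 f) by (eapply star_ty; eauto).
      inversion Tr; subst.
      destruct (sub_wn (S (fsize f)) f ltac:(lia) b [] G g r2 ltac:(eassumption) Tu N2) as [IH3 _].
      destruct (IH3 Nb) as [r [Sr Nr]]. simpl in Sr.
      exists r. split; auto.
      apply star_trans with (dApp (dLam f b) r2); [apply star_app; auto|].
      econstructor; [constructor|auto].
Qed.

Lemma dty_free {A} (t : dterm A) : forall G f i, dty G t f -> dfree i t -> i < length G.
Proof.
  induction t; intros G g i Ht Hi; inversion Ht; subst.
  - apply dfree_var in Hi; subst. apply nth_error_Some. congruence.
  - apply dfree_lam in Hi. specialize (IHt _ _ _ ltac:(eassumption) Hi). simpl in IHt. lia.
  - apply dfree_app in Hi. destruct Hi; eauto.
Qed.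

Lemma NoDup_mid {T} (l1 l2 l3 : list T) : NoDup (l1 ++ l2 ++ l3) -> NoDup (l1 ++ l3).
Proof. induction l2; simpl; auto. intro H. apply IHl2. eapply NoDup_remove_1; eauto. Qed.

Fixpoint idx {X} (O : X -> nat) (ns : list X) (x : X) : nat :=
  match ns with [] => 0 | y :: ns => if Nat.eqb (O y) (O x) then 0 else S (idx O ns x) end.

Fixpoint tr {A X} (O : X -> nat) (Om : X -> formula A) (ns : list X) (M : term X) : dterm A :=
  match M with
  | Var x => dVar (idx O ns x)
  | Lam x M => dLam (Om x) (tr O Om (x :: ns) M)
  | App M N => dApp (tr O Om ns M) (tr O Om ns N)
  end.

Lemma idx_nth {X} (O : X -> nat) (Oi : forall x y, O x = O y -> x = y) ns x :
  In x ns -> nth_error ns (idx O ns x) = Some x.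
Proof.
  induction ns as [|y ns IH]; simpl; [tauto|]. intros [->|H].
  - rewrite Nat.eqb_refl. reflexivity.
  - destruct (Nat.eqb_spec (O y) (O x)); simpl; auto. rewrite (Oi _ _ e). auto.
Qed.

Lemma free_lam_iff {X} (x y : X) M : free x (Lam y M) <-> free x M /\ x <> y.
Proof. split; [intro H; inversion H; auto|intros [? ?]; constructor; auto]. Qed.
Lemma free_app_iff {X} (x : X) M N : free x (App M N) <-> free x M \/ free x N.
Proof. split; [intro H; inversion H; auto|intros [?|?]; [apply free_appl|apply free_appr]; auto]. Qed.
Lemma free_var_iff {X} (x y : X) : free x (Var y) <-> x = y.
Proof. split; [intro H; inversion H; auto|intros ->; constructor]. Qed.

Lemma tr_free {A X} (O : X -> nat) (Oi : forall x y, O x = O y -> x = y) (Om : X -> formula A) M :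
  forall ns i, dfree i (tr O Om ns M) <-> exists x, free x M /\ idx O ns x = i.
Proof.
  induction M as [x|x M IH|M IHM N IHN]; intros ns i; simpl.
  - rewrite dfree_var. split; [intros ->; exists x; split; [constructor|auto]|].
    intros [y [Hy E]]. apply free_var_iff in Hy. subst. auto.
  - rewrite dfree_lam, IH. split.
    + intros [y [Hy E]]. simpl in E. destruct (Nat.eqb_spec (O x) (O y)); [discriminate|].
      exists y. split; [apply free_lam_iff; split; auto; intros ->; auto|congruence].
    + intros [y [Hy E]]. apply free_lam_iff in Hy. destruct Hy as [Hy Ne].
      exists y. split; auto. simpl. destruct (Nat.eqb_spec (O x) (O y)).
      * exfalso. apply Ne. symmetry. apply Oi; auto.
      * congruence.
  - rewrite dfree_app, IHM, IHN. split.
    + intros [[y [Hy E]]|[y [Hy E]]]; exists y; split; auto; apply free_app_iff; auto.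
    + intros [y [Hy E]]. apply free_app_iff in Hy. destruct Hy; [left|right]; eauto.
Qed.

Lemma tr_ty {A X} (O : X -> nat) (Oi : forall x y, O x = O y -> x = y) (Om : X -> formula A) M :
  forall ns p, (forall x, free x M -> In x ns) -> has_type O Om M p -> dty (map Om ns) (tr O Om ns M) p.
Proof.
  induction M as [x|x M IH|M IHM N IHN]; intros ns p Hs Ht; simpl; inversion Ht; subst.
  - constructor. rewrite nth_error_map, idx_nth; auto. apply Hs. constructor.
  - match goal with H : has_type O Om (Var x) _ |- _ => inversion H; subst end.
    constructor. apply (IH (x :: ns)); auto.
    intros y Hy. destruct (Nat.eqb_spec (O y) (O x)).
    + left. symmetry. apply Oi; auto.
    + right. apply Hs. apply free_lam_iff. split; auto. intros ->; auto.
  - econstructor; [apply IHM|apply IHN]; eauto;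
      intros y Hy; apply Hs; apply free_app_iff; auto.
Qed.

Definition Ord {X} (O : X -> nat) (ns : list X) (M : term X) : Prop :=
  forall i j a b, nth_error ns i = Some a -> nth_error ns j = Some b -> i < j ->
    free a M -> free b M -> O b < O a.

Lemma tr_HRM {A X} (O : X -> nat) (Oi : forall x y, O x = O y -> x = y) (Om : X -> formula A) M :
  forall ns, NoDup (ns ++ binders M) -> Ord O ns M -> (forall x, free x M -> In x ns) ->
  HRM O M -> dHRM (tr O Om ns M).
Proof.
  induction M as [x|x M IH|M IHM N IHN]; intros ns Hnd Hord Hs Hh; simpl; inversion Hh; subst.
  - constructor.
  - simpl in Hnd. assert (Nx : ~ In x ns).
    { intro Hin. apply (NoDup_remove_2 _ _ _ Hnd). apply in_or_app; auto. }
    constructor.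
    + apply IH; auto.
      * simpl. eapply Permutation_NoDup; [|exact Hnd]. apply Permutation_sym, Permutation_middle.
      * intros i j a b Ha Hb Lt Fa Fb. destruct i as [|i]; destruct j as [|j]; try lia.
        -- simpl in Ha, Hb. injection Ha as <-.
           assert (b <> x) by (intros ->; apply Nx; eapply nth_error_In; eauto).
           assert (O b <= O x) by auto.
           assert (O b <> O x) by (intro E; apply Oi in E; auto). lia.
        -- simpl in Ha, Hb. apply (Hord i j a b); auto; try lia; apply free_lam_iff; split; auto;
           intros ->; apply Nx; eapply nth_error_In; eauto.
      * intros y Hy. destruct (Nat.eqb_spec (O y) (O x)).
        -- left. symmetry. apply Oi; auto.
        -- right. apply Hs. apply free_lam_iff. split; auto. intros ->; auto.
    + apply (tr_free O Oi Om M (x :: ns) 0). exists x. split; auto. simpl. rewrite Nat.eqb_refl. auto.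
  - simpl in Hnd. constructor.
    + apply IHM; auto.
      * rewrite app_assoc in Hnd. eapply NoDup_app_remove_r; eauto.
      * intros i j a b Ha Hb Lt Fa Fb. apply (Hord i j a b); auto; apply free_app_iff; auto.
      * intros y Hy; apply Hs; apply free_app_iff; auto.
    + apply IHN; auto.
      * eapply NoDup_mid; eauto.
      * intros i j a b Ha Hb Lt Fa Fb. apply (Hord i j a b); auto; apply free_app_iff; auto.
      * intros y Hy; apply Hs; apply free_app_iff; auto.
    + intros i Hi. apply tr_free in Hi; auto. destruct Hi as [a [Fa Ea]].
      match goal with H : forall x, free x M -> exists y, free y N /\ _ |- _ =>
        destruct (H a Fa) as [b [Fb Le]] end.
      exists (idx O ns b). split; [apply tr_free; auto; exists b; auto|].
      destruct (Nat.le_gt_cases (idx O ns b) i) as [Ok|Bad]; auto. exfalso.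
      assert (Ina : In a ns) by (apply Hs; apply free_app_iff; auto).
      assert (Inb : In b ns) by (apply Hs; apply free_app_iff; auto).
      assert (O b < O a).
      { apply (Hord i (idx O ns b) a b); auto.
        - subst i. apply idx_nth; auto.
        - apply idx_nth; auto.
        - apply free_app_iff; auto.
        - apply free_app_iff; auto. }
      lia.
Qed.

Definition mxb {X} (O : X -> nat) (P : term X) (n : nat) : nat :=
  fold_right (fun y acc => Nat.max (O y) acc) n (binders P).

Lemma mxb_ge {X} (O : X -> nat) P n : n <= mxb O P n.
Proof. unfold mxb. induction (binders P); simpl; lia. Qed.
Lemma mxb_in {X} (O : X -> nat) P n y : In y (binders P) -> O y <= mxb O P n.
Proof. unfold mxb. induction (binders P); simpl; [tauto|]. intros [->|H]; [lia|]. specialize (IHl H); lia. Qed.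

Fixpoint back {A X} (O : X -> nat) (fr : formula A -> nat -> X) (x0 : X)
  (n : nat) (ns : list X) (t : dterm A) : term X :=
  match t with
  | dVar i => Var (nth i ns x0)
  | dLam f b => Lam (fr f n) (back O fr x0 (O (fr f n)) (fr f n :: ns) b)
  | dApp t u => App (back O fr x0 n ns t)
                    (back O fr x0 (mxb O (back O fr x0 n ns t) n) ns u)
  end.

Section Back.
Context {A X : Type} (O : X -> nat) (Oi : forall x y, O x = O y -> x = y)
  (Om : X -> formula A) (fr : formula A -> nat -> X) (x0 : X)
  (Hfr : forall f n, Om (fr f n) = f /\ n < O (fr f n)).

Lemma B1 t : forall n ns y, In y (binders (back O fr x0 n ns t)) -> n < O y.
Proof.
  induction t as [i|f b IH|t IHt u IHu]; intros n ns y H; simpl in H.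
  - tauto.
  - destruct H as [<-|H]; [apply Hfr|]. apply IH in H. pose proof (proj2 (Hfr f n)). lia.
  - apply in_app_or in H. destruct H as [H|H]; [eauto|].
    apply IHu in H. pose proof (mxb_ge O (back O fr x0 n ns t) n). lia.
Qed.

Lemma B2 t : forall n ns, NoDup (binders (back O fr x0 n ns t)).
Proof.
  induction t as [i|f b IH|t IHt u IHu]; intros n ns; simpl.
  - constructor.
  - constructor; auto. intro H. apply B1 in H. lia.
  - apply NoDup_app; auto. intros y H1 H2. apply B1 in H2.
    pose proof (mxb_in O _ n y H1). lia.
Qed.

Lemma B3a t : forall n ns y, (forall i, dfree i t -> i < length ns) ->
  free y (back O fr x0 n ns t) -> exists i, dfree i t /\ nth_error ns i = Some y.
Proof.
  induction t as [i|f b IH|t IHt u IHu]; intros n ns y Sc H; simpl in H.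
  - apply free_var_iff in H. subst. exists i. split; [constructor|].
    apply nth_error_nth'. apply Sc. constructor.
  - apply free_lam_iff in H. destruct H as [H Ne].
    assert (Sc' : forall i, dfree i b -> i < length (fr f n :: ns)).
    { intros [|i] Hi; simpl; [lia|]. apply -> Nat.succ_lt_mono. apply Sc, dfree_lam, Hi. }
    destruct (IH _ _ _ Sc' H) as [[|i] [Hi E]].
    + simpl in E. congruence.
    + exists i. split; auto. apply dfree_lam; auto.
  - apply free_app_iff in H. destruct H as [H|H].
    + destruct (IHt n ns y ltac:(intros; apply Sc, dfree_app; auto) H) as [i [Hi E]].
      exists i; split; auto; apply dfree_app; auto.
    + destruct (IHu _ ns y ltac:(intros; apply Sc, dfree_app; auto) H) as [i [Hi E]].
      exists i; split; auto; apply dfree_app; auto.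
Qed.

Lemma B3b t : forall n ns i y, (forall z, In z ns -> O z <= n) ->
  dfree i t -> nth_error ns i = Some y -> free y (back O fr x0 n ns t).
Proof.
  induction t as [j|f b IH|t IHt u IHu]; intros n ns i y D1 Hi E; simpl.
  - apply dfree_var in Hi. subst. erewrite nth_error_nth; eauto. constructor.
  - apply dfree_lam in Hi. apply free_lam_iff. split.
    + apply (IH _ _ (S i)); auto. intros z [<-|Hz]; auto. apply D1 in Hz. pose proof (proj2 (Hfr f n)). lia.
    + intros ->. apply nth_error_In in E. apply D1 in E. pose proof (proj2 (Hfr f n)). lia.
  - apply dfree_app in Hi. apply free_app_iff. destruct Hi as [Hi|Hi]; [left; eauto|right].
    apply (IHu _ _ i); auto. intros z Hz. apply D1 in Hz. pose proof (mxb_ge O (back O fr x0 n ns t) n). lia.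
Qed.

Definition Dec (ns : list X) := forall i j a b, nth_error ns i = Some a ->
  nth_error ns j = Some b -> i < j -> O b < O a.

Lemma B4 t : forall n ns, (forall z, In z ns -> O z <= n) -> Dec ns ->
  (forall i, dfree i t -> i < length ns) -> dHRM t -> HRM O (back O fr x0 n ns t).
Proof.
  induction t as [j|f b IH|t IHt u IHu]; intros n ns D1 D2 Sc Hh; simpl; inversion Hh; subst.
  - constructor.
  - pose proof (proj2 (Hfr f n)) as Hx.
    assert (D1' : forall z, In z (fr f n :: ns) -> O z <= O (fr f n)).
    { intros z [<-|Hz]; auto. apply D1 in Hz. lia. }
    assert (Sc' : forall i, dfree i b -> i < length (fr f n :: ns)).
    { intros [|i] Hi; simpl; [lia|]. apply -> Nat.succ_lt_mono. apply Sc, dfree_lam, Hi. }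
    constructor.
    + apply IH; auto. intros [|i] [|j] a c Ha Hc Lt; simpl in *; try lia.
      * injection Ha as <-. apply nth_error_In, D1 in Hc. lia.
      * apply (D2 i j); auto; lia.
    + apply (B3b b _ _ 0); auto.
    + intros y Hy. destruct (B3a b _ _ _ Sc' Hy) as [i [Hi E]]. apply nth_error_In in E. auto.
  - assert (Sc1 : forall i, dfree i t -> i < length ns) by (intros; apply Sc, dfree_app; auto).
    assert (Sc2 : forall i, dfree i u -> i < length ns) by (intros; apply Sc, dfree_app; auto).
    constructor.
    + apply IHt; auto.
    + apply IHu; auto. intros z Hz. apply D1 in Hz. pose proof (mxb_ge O (back O fr x0 n ns t) n). lia.
    + intros a Ha. destruct (B3a t _ _ _ Sc1 Ha) as [i [Hi E]].
      match goal with H : forall i, dfree i t -> exists j, dfree j u /\ _ |- _ =>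
        destruct (H i Hi) as [j [Hj Le]] end.
      destruct (nth_error ns j) as [c|] eqn:Ec; [|apply nth_error_None in Ec; specialize (Sc2 j Hj); lia].
      exists c. split.
      * apply (B3b u _ _ j); auto. intros z Hz. apply D1 in Hz. pose proof (mxb_ge O (back O fr x0 n ns t) n). lia.
      * destruct (Nat.eq_dec j i).
        -- subst. rewrite E in Ec. injection Ec as ->. lia.
        -- assert (O a < O c) by (apply (D2 j i); auto; lia). lia.
Qed.

Lemma B5 t : forall n ns p, (forall z, In z ns -> O z <= n) -> Dec ns ->
  dty (map Om ns) t p -> dHRM t -> has_type O Om (back O fr x0 n ns t) p.
Proof.
  induction t as [j|f b IH|t IHt u IHu]; intros n ns p D1 D2 Ht Hh; simpl; inversion Ht; subst.
  - rewrite nth_error_map in *. destruct (nth_error ns j) as [c|] eqn:Ec; simpl in *; [|discriminate].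
    injection H1 as <-. erewrite nth_error_nth; eauto. constructor.
  - pose proof (proj2 (Hfr f n)) as Hx.
    pose proof (B4 (dLam f b) n ns D1 D2 (fun i Hi => eq_ind _ (fun k => i < k) (dty_free _ _ _ _ Ht Hi) _ (length_map _ _)) Hh) as HH. simpl in HH.
    inversion Hh; subst.
    constructor; auto.
    + rewrite <- (proj1 (Hfr f n)) at 2. constructor.
    + apply IH; auto.
      * intros z [<-|Hz]; auto. apply D1 in Hz. lia.
      * intros [|i] [|j] a c Ha Hc Lt; simpl in *; try lia.
        -- injection Ha as <-. apply nth_error_In, D1 in Hc. lia.
        -- apply (D2 i j); auto; lia.
      * simpl. rewrite (proj1 (Hfr f n)). auto.
  - pose proof (B4 (dApp t u) n ns D1 D2 (fun i Hi => eq_ind _ (fun k => i < k) (dty_free _ _ _ _ Ht Hi) _ (length_map _ _)) Hh) as HH. simpl in HH.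
    inversion Hh; subst.
    econstructor; eauto. apply IHu; auto.
    intros z Hz. apply D1 in Hz. pose proof (mxb_ge O (back O fr x0 n ns t) n). lia.
Qed.

Lemma B6 t : forall n ns, (ne t -> ~ has_redex (back O fr x0 n ns t) /\
    forall x M, back O fr x0 n ns t <> Lam x M) /\ (nf t -> ~ has_redex (back O fr x0 n ns t)).
Proof.
  induction t as [j|f b IH|t IHt u IHu]; intros n ns; simpl.
  - split; [intros _; split; [intro Hr; inversion Hr|discriminate]|intros _ Hr; inversion Hr].
  - split; [tauto|]. intros Hb Hr. inversion Hr; subst. eapply (proj2 (IH _ _)); eauto.
  - assert (K : ne t /\ nf u -> ~ has_redex (App (back O fr x0 n ns t)
       (back O fr x0 (mxb O (back O fr x0 n ns t) n) ns u))).
    { intros [H1 H2] Hr. inversion Hr; subst.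
      - eapply (proj2 (proj1 (IHt n ns) H1)); eauto.
      - eapply (proj1 (proj1 (IHt n ns) H1)); eauto.
      - eapply (proj2 (IHu _ ns)); eauto. }
    split; [intro; split; [auto|discriminate]|auto].
Qed.

End Back.

Lemma has_type_HRM {A X} (O : X -> nat) (Om : X -> formula A) M p :
  has_type O Om M p -> HRM O M.
Proof. intro H; inversion H; subst; auto; constructor. Qed.

Lemma fresh_ex {A X} (O : X -> nat) (Oi : forall x y, O x = O y -> x = y) (Om : X -> formula A)
  (Om_inf : forall phi : formula A, infinite_pred (fun x => Om x = phi)) :
  forall f n, exists x, Om x = f /\ n < O x.
Proof.
  intros f n. apply NNPP. intro Hno.
  apply (Om_inf f).
  exists (flat_map (fun m => match excluded_middle_informative (exists x, Om x = f /\ O x = m) with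
                   | left H => [proj1_sig (constructive_indefinite_description _ H)]
                   | right _ => [] end) (seq 0 (S n))).
  intros x Hx. apply in_flat_map. exists (O x). split.
  - apply in_seq. split; [lia|]. destruct (Nat.le_gt_cases (O x) n); [lia|].
    exfalso. apply Hno. exists x. auto.
  - destruct (excluded_middle_informative (exists y, Om y = f /\ O y = O x)) as [H|H].
    + destruct (constructive_indefinite_description _ H) as [y [Hy1 Hy2]]. simpl. left. apply Oi; auto.
    + exfalso. apply H. exists x. auto.
Qed.

Theorem lemma1p6 (A X : Type) (O : X -> nat)
  (O_inj : forall x y, O x = O y -> x = y)
  (X_inf : infinite_pred (fun _ : X => True))
  (Omega : X -> formula A)
  (Omega_inf : forall phi : formula A, infinite_pred (fun x => Omega x = phi))
  (phi : formula A) :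
  (exists M : term X, closed M /\ well_named M /\ has_type O Omega M phi) ->
  NF_inhabited O Omega phi.
Proof.
  intros [M [Hc [[Hnd _] Ht]]].
  set (t := tr O Omega [] M).
  assert (Tt : dty [] t phi).
  { apply (tr_ty O O_inj Omega M [] phi); auto; intros x Hx; exfalso; apply (Hc x Hx). }
  assert (Ht' : dHRM t).
  { apply (tr_HRM O O_inj Omega M []).
    - exact Hnd.
    - intros i j a b Ha. destruct i; discriminate.
    - intros x Hx. exfalso. apply (Hc x Hx).
    - eapply has_type_HRM; eauto. }
  destruct (wn t [] phi Tt) as [r [Sr Nr]].
  assert (Tr : dty [] r phi) by (eapply star_ty; eauto).
  destruct (star_HRM _ _ Sr Ht') as [Hr Fr].
  pose proof (fresh_ex O O_inj Omega Omega_inf) as Hex.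
  set (fr := fun f n => proj1_sig (constructive_indefinite_description _ (Hex f n))).
  assert (Hfr : forall f n, Omega (fr f n) = f /\ n < O (fr f n)).
  { intros f n. unfold fr. destruct (constructive_indefinite_description _ (Hex f n)); auto. }
  set (N := back O fr (fr phi 0) 0 [] r).
  assert (Sc : forall i, dfree i r -> i < length (@nil X)).
  { intros i Hi. apply (dty_free _ _ _ _ Tr Hi). }
  assert (Cl : closed N).
  { intros y Hy. destruct (B3a O fr (fr phi 0) r 0 [] y Sc Hy) as [i [_ E]].
    destruct i; discriminate. }
  exists N. split; [exact Cl|]. split; [split|split].
  - apply (B2 O Omega fr (fr phi 0) Hfr).
  - intros x [Hx _]. apply (Cl x Hx).
  - apply (proj2 (B6 O fr (fr phi 0) r 0 [])); auto.
  - apply (B5 O Omega fr (fr phi 0) Hfr); auto.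
    + intros z [].
    + intros i j a b Ha. destruct i; discriminate.
Qed.
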